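(* Let $G$ be a (finite, or countable locally finite) cavity-monotone network such that for every $t>0$ the cavity equation $\mathbf x=t\Gamma_G(\mathbf x)$ has a unique globally attractive solution $\mathbf x(t)$. Then for all $0<s\le t$, $$\frac{s}{t}\,\mathbf x(t)\le\mathbf x(s)\le\mathbf x(t)$$ coordinatewise. In particular $t\mapsto\mathbf x(t)$ is continuous on $(0,\infty)$.
   Context: Measures over subsets: for a finite set $E$, a measure is $\mu:2^E\to[0,\infty)$; $Z(\mathbf w)=\sum_{F\subseteq E}\mu(F)\mathbf w^F$, $\mathbf w^F=\prod_{e\in F}w_e$; the cavity ratio is $\Gamma^e_\mu(\mathbf w')=Z^{/e}(\mathbf w')/Z^{\setminus e}(\mathbf w')$ where $Z^{\setminus e}(\mathbf w')=\sum_{F\not\ni e}\mu(F)\mathbf w'^F$, $Z^{/e}(\mathbf w')=\sum_{F\not\ni e}\mu(F\cup\{e\})\mathbf w'^F$; for $\mathbf w\in(0,\infty)^E$, $\mathbb P^{\mathbf w}_\mu(\mathcal F=F)=\mu(F)\mathbf w^F/Z(\mathbf w)$. $\mu$ is Rayleigh if for all $\mathbf w\in(0,\infty)^E$, $e\neq f$: $\mathbb P^{\mathbf w}_\mu(e,f\in\mathcal F)\le\mathbb P^{\mathbf w}_\mu(e\in\mathcal F)\mathbb P^{\mathbf w}_\mu(f\in\mathcal F)$; size-increasing if for all $\mathbf w\in(0,\infty)^E$, $e\in E$: $\mathbb E^{\mathbf w}_\mu[|\mathcal F|\mathbf 1_{e\in\mathcal F}]>\mathbb E^{\mathbf w}_\mu|\mathcal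 F|\,\mathbb P^{\mathbf w}_\mu(e\in\mathcal F)$; cavity-monotone if $\mu(\emptyset)>0$, Rayleigh and size-increasing. Networks: a network is a simple locally finite graph $G=(V,E)$ with, for each $i\in V$, a local measure $\mu_i$ over the subsets of $E_i$ (edges incident to $i$); cavity-monotone if every $\mu_i$ is; $\partial i$ is the set of neighbours of $i$. Configurations $\mathbf x\in[0,\infty)^{\vec E}$; cavity operator $\Gamma_G(\mathbf x)_{i\to j}=\Gamma^{ij}_{\mu_i}(x_{k\to i}:k\in\partial i\setminus\{j\})$; cavity equation at activity $t$: $\mathbf x=t\Gamma_G(\mathbf x)$; a solution is globally attractive if the iterates of $t\Gamma_G$ from any configuration converge coordinatewise to it. *)

(* Defs.v *)
From mathcomp Require Import all_boot.
From Stdlib Require Import Reals.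
Set Implicit Arguments. Unset Strict Implicit. Unset Printing Implicit Defensive.
Open Scope R_scope.

Section Measures.
Variable E : finType.
Implicit Types (mu : {set E} -> R) (w : E -> R).

Definition wpow w (F : {set E}) : R := \big[Rmult/1]_(e in F) w e.

Definition Zpart mu w : R := \big[Rplus/0]_(F : {set E}) (mu F * wpow w F).

Definition Zdel mu (e : E) w : R :=
  \big[Rplus/0]_(F : {set E} | e \notin F) (mu F * wpow w F).
Definition Zcon mu (e : E) w : R :=
  \big[Rplus/0]_(F : {set E} | e \notin F) (mu (e |: F) * wpow w F).

(* cavity ratio Gamma^e_mu(w') ; coordinate w'_e is irrelevant *)
Definition cavity_ratio mu (e : E) w : R := Zcon mu e w / Zdel mu e w.

Definition prob mu w (P : pred {set E}) : R :=
  (\big[Rplus/0]_(F : {set E} | P F) (mu F * wpow w F)) / Zpart mu w.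

Definition expect mu w (g : {set E} -> R) : R :=
  (\big[Rplus/0]_(F : {set E}) (g F * (mu F * wpow w F))) / Zpart mu w.

Definition positive_weights w : Prop := forall e, 0 < w e.

Definition rayleigh mu : Prop :=
  forall w, positive_weights w -> forall e f : E, e != f ->
    prob mu w (fun F => (e \in F) && (f \in F))
      <= prob mu w (fun F => e \in F) * prob mu w (fun F => f \in F).

Definition size_increasing mu : Prop :=
  forall w, positive_weights w -> forall e : E,
    expect mu w (fun F => INR #|F| * (if e \in F then 1 else 0))
      > expect mu w (fun F => INR #|F|) * prob mu w (fun F => e \in F).

Definition cavity_monotone mu : Prop :=
  0 < mu set0 /\ rayleigh mu /\ size_increasing mu.

End Measures.

(* A network on a countable vertex type V: a simple locally finite graph given
   by finite neighbour lists (symmetric, loop-free), and for each vertex i a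
   local measure mu i on the subsets of E_i, where the edge {i,j} in E_i is
   identified with the neighbour j (an element of seq_sub (nb i)). *)
Record network (V : countType) := Network {
  nb : V -> seq V;
  nb_irrefl : forall i, i \notin nb i;
  nb_sym : forall i j, (j \in nb i) = (i \in nb j);
  lmu : forall i : V, {set seq_sub (nb i)} -> R;
  lmu_nonneg : forall (i : V) (F : {set seq_sub (nb i)}), 0 <= lmu F
}.

Definition cavity_monotone_network (V : countType) (G : network V) : Prop :=
  forall i : V, cavity_monotone (@lmu V G i).

(* configurations: x i j = x_{i -> j}; only values on directed edges matter *)
Definition config (V : countType) := V -> V -> R.

Definition is_config (V : countType) (G : network V) (x : config V) : Prop :=
  forall i j, j \in nb G i -> 0 <= x i j.

(* Gamma_G(x)_{i->j} = Gamma^{ij}_{mu_i}(x_{k->i} : k in di \ {j}); 0 off edges *)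
Definition cavity_op (V : countType) (G : network V) (x : config V) : config V :=
  fun i j =>
    match (insub j : option (seq_sub (nb G i))) with
    | Some e => cavity_ratio (@lmu V G i) e (fun k : seq_sub (nb G i) => x (val k) i)
    | None => 0
    end.

Definition is_cavity_solution (V : countType) (G : network V) (t : R) (x : config V) : Prop :=
  is_config G x /\ forall i j, j \in nb G i -> x i j = t * cavity_op G x i j.

Definition cavity_iter (V : countType) (G : network V) (t : R) (n : nat) (y : config V) : config V :=
  iter n (fun z : config V => fun i j => t * cavity_op G z i j) y.

Definition globally_attractive (V : countType) (G : network V) (t : R) (x : config V) : Prop :=
  forall y : config V, is_config G y ->
    forall i j, j \in nb G i -> Un_cv (fun n => cavity_iter G t n y i j) (x i j).

(* Main.v *)
Require Import Defs.
From HB Require Import structures.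
From mathcomp Require Import all_boot.
From Stdlib Require Import Reals Lra Psatz FunctionalExtensionality.
Set Implicit Arguments. Unset Strict Implicit. Unset Printing Implicit Defensive.
Open Scope R_scope.

HB.instance Definition _ := Monoid.isComLaw.Build R 0 Rplus (fun x y z => esym (Rplus_assoc x y z)) Rplus_comm Rplus_0_l.
HB.instance Definition _ := Monoid.isComLaw.Build R 1 Rmult (fun x y z => esym (Rmult_assoc x y z)) Rmult_comm Rmult_1_l.
HB.instance Definition _ := Monoid.isMulLaw.Build R 0 Rmult Rmult_0_l Rmult_0_r.
HB.instance Definition _ := Monoid.isAddLaw.Build R Rmult Rplus Rmult_plus_distr_r Rmult_plus_distr_l.

Definition Wsum (E : finType) (P : pred {set E}) (g : {set E} -> R) (w : E -> R) : R :=
  \big[Rplus/0]_(F | P F) (g F * wpow w F).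

Lemma wpow_setU1 (E : finType) (w : E -> R) (f : E) (F : {set E}) : f \notin F ->
  wpow w (f |: F) = w f * wpow w F.
Proof. move=> fF; rewrite /wpow big_setU1 //. Qed.

Lemma wpow_ext (E : finType) (w w' : E -> R) (F : {set E}) :
  (forall k, k \in F -> w k = w' k) -> wpow w F = wpow w' F.
Proof. move=> H; rewrite /wpow; apply: eq_bigr => k kF; exact: H. Qed.

Lemma wpow0 (E : finType) (w : E -> R) : wpow w set0 = 1.
Proof. by rewrite /wpow big_set0. Qed.

Lemma wpow_nonneg (E : finType) (w : E -> R) (F : {set E}) :
  (forall k, 0 <= w k) -> 0 <= wpow w F.
Proof.
move=> H; rewrite /wpow; apply: (big_ind (fun x => 0 <= x)) => //; first lra.
by move=> x y; apply: Rmult_le_pos.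
Qed.

Lemma Wsum_nonneg (E : finType) (P : pred {set E}) (g : {set E} -> R) (w : E -> R) :
  (forall F, 0 <= g F) -> (forall k, 0 <= w k) -> 0 <= Wsum P g w.
Proof.
move=> Hg Hw; rewrite /Wsum; apply: (big_ind (fun x => 0 <= x)) => //; first lra.
- by move=> x y; lra.
- move=> F _; apply: Rmult_le_pos => //; exact: wpow_nonneg.
Qed.

Lemma Wsum_ge0 (E : finType) (P : pred {set E}) (g : {set E} -> R) (w : E -> R) :
  (forall F, 0 <= g F) -> (forall k, 0 <= w k) -> P set0 -> g set0 <= Wsum P g w.
Proof.
move=> Hg Hw P0; rewrite /Wsum (bigD1 set0) //= wpow0 Rmult_1_r.
have : 0 <= \big[Rplus/0]_(F | P F && (F != set0)) (g F * wpow w F).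
  apply: (big_ind (fun x => 0 <= x)) => //; first lra.
  - by move=> x y; lra.
  - move=> F _; apply: Rmult_le_pos => //; exact: wpow_nonneg.
move=> H; rewrite -{1}(Rplus_0_r (g set0)); exact: Rplus_le_compat_l.
Qed.

Lemma Wsum_split (E : finType) (f : E) (P : pred {set E}) (g : {set E} -> R) (w : E -> R) :
  Wsum P g w = Wsum (fun F => P F && (f \notin F)) g w +
     w f * Wsum (fun F => P (f |: F) && (f \notin F)) (fun F => g (f |: F)) w.
Proof.
rewrite /Wsum (bigID (fun F : {set E} => f \in F)) /= Rplus_comm; congr (_ + _).
rewrite (reindex_onto (fun F : {set E} => f |: F) (fun F : {set E} => F :\ f)) /=; last first.
  by move=> F /andP[_ fF]; rewrite setD1K.
rewrite big_distrr /=; apply: eq_big.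
- move=> F; rewrite setU11 andbT; congr andb.
  case fF: (f \in F) => /=.
  + apply/negbTE; apply/eqP => Heq.
    by move: (setD11 f (f |: F)); rewrite Heq fF.
  + by rewrite setU1K ?fF // eqxx.
- move=> F /andP[_ /eqP H].
  have fF : f \notin F by rewrite -H setD11.
  rewrite wpow_setU1 //; ring.
Qed.

Lemma Wsum_sel (E : finType) (P S : pred {set E}) (b : bool) (g : {set E} -> R) (w : E -> R) :
  (forall F, P F = S F && b) -> Wsum P g w = if b then Wsum S g w else 0.
Proof.
move=> H; rewrite /Wsum; case: b H => H.
- by apply: eq_bigl => F; rewrite H andbT.
- by rewrite big_pred0 // => F; rewrite H andbF.
Qed.

Definition S2 (E : finType) (e f : E) : pred {set E} := fun F => (e \notin F) && (f \notin F).

Lemma Wsum_four (E : finType) (e f : E) (Q : pred {set E}) (b00 b01 b10 b11 : bool)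
  (g : {set E} -> R) (w : E -> R) : e != f ->
  (forall F : {set E}, e \notin F -> f \notin F ->
     [/\ Q F = b00, Q (f |: F) = b01, Q (e |: F) = b10 & Q (e |: (f |: F)) = b11]) ->
  Wsum Q g w =
   (if b00 then Wsum (S2 e f) g w else 0) +
   w f * (if b01 then Wsum (S2 e f) (fun F => g (f |: F)) w else 0) +
   w e * ((if b10 then Wsum (S2 e f) (fun F => g (e |: F)) w else 0) +
          w f * (if b11 then Wsum (S2 e f) (fun F => g (e |: (f |: F))) w else 0)).
Proof.
move=> nef H.
have efF : forall F : {set E}, (e \notin f |: F) = (e \notin F).
  by move=> F; rewrite in_setU1 (negbTE nef).
rewrite (Wsum_split e) (Wsum_split f) (Wsum_split f (fun F : {set E} => Q (e |: F) && (e \notin F))).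
rewrite (@Wsum_sel _ (fun F : {set E} => Q F && (e \notin F) && (f \notin F)) (S2 e f) b00); last first.
  move=> F; rewrite /S2; case eF: (e \in F); first by rewrite !andbF.
  case fF: (f \in F); first by rewrite !andbF.
  by case: (H F (negbT eF) (negbT fF)) => -> _ _ _ /=; rewrite ?andbT.
rewrite (@Wsum_sel _ (fun F : {set E} => Q (f |: F) && (e \notin f |: F) && (f \notin F)) (S2 e f) b01); last first.
  move=> F; rewrite /S2 efF; case eF: (e \in F); first by rewrite !andbF.
  case fF: (f \in F); first by rewrite !andbF.
  by case: (H F (negbT eF) (negbT fF)) => _ -> _ _ /=; rewrite ?andbT.
rewrite (@Wsum_sel _ (fun F : {set E} => Q (e |: F) && (e \notin F) && (f \notin F)) (S2 e f) b10); last first.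
  move=> F; rewrite /S2; case eF: (e \in F); first by rewrite !andbF.
  case fF: (f \in F); first by rewrite !andbF.
  by case: (H F (negbT eF) (negbT fF)) => _ _ -> _ /=; rewrite ?andbT.
rewrite (@Wsum_sel _ (fun F : {set E} => Q (e |: (f |: F)) && (e \notin f |: F) && (f \notin F)) (S2 e f) b11); last first.
  move=> F; rewrite /S2 efF; case eF: (e \in F); first by rewrite !andbF.
  case fF: (f \in F); first by rewrite !andbF.
  by case: (H F (negbT eF) (negbT fF)) => _ _ _ -> /=; rewrite ?andbT.
ring.
Qed.

Lemma Wsum_S2_ext (E : finType) (e f : E) (g : {set E} -> R) (u v : E -> R) :
  (forall k, k != e -> k != f -> u k = v k) -> Wsum (S2 e f) g u = Wsum (S2 e f) g v.
Proof.
move=> H; rewrite /Wsum; apply: eq_bigr => F /andP[eF fF]; congr (_ * _).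
apply: wpow_ext => k kF; apply: H; apply/eqP => Hk; subst k.
- by rewrite kF in eF.
- by rewrite kF in fF.
Qed.

Lemma ray_pos (E : finType) (mu : {set E} -> R) (e f : E) (u : E -> R) :
  0 < mu set0 -> (forall F, 0 <= mu F) -> rayleigh mu -> e != f -> (forall k, 0 < u k) ->
  Wsum (S2 e f) (fun F => mu (e |: (f |: F))) u * Wsum (S2 e f) mu u <=
  Wsum (S2 e f) (fun F => mu (e |: F)) u * Wsum (S2 e f) (fun F => mu (f |: F)) u.
Proof.
move=> mu0 mupos Hr nef upos.
pose v := fun k => if (k == e) || (k == f) then 1 else u k.
have vpos : positive_weights v.
  by move=> k; rewrite /v; case: ifP => _; [lra | exact: upos].
have ve : v e = 1 by rewrite /v eqxx.
have vf : v f = 1 by rewrite /v eqxx orbT.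
have Hext : forall g, Wsum (S2 e f) g u = Wsum (S2 e f) g v.
  move=> g; apply: Wsum_S2_ext => k ke kf; by rewrite /v (negbTE ke) (negbTE kf).
rewrite !Hext.
set C := Wsum (S2 e f) mu v.
set D := Wsum (S2 e f) (fun F => mu (f |: F)) v.
set A := Wsum (S2 e f) (fun F => mu (e |: F)) v.
set B := Wsum (S2 e f) (fun F => mu (e |: (f |: F))) v.
have fne : (f == e) = false by apply/negbTE; rewrite eq_sym.
have HZ : Zpart mu v = C + D + (A + B).
  change (Wsum (fun _ => true) mu v = C + D + (A + B)).
  rewrite (@Wsum_four _ e f _ true true true true) //= ve vf; first by rewrite /C /D /A /B; ring.
have He : prob mu v (fun F => e \in F) = (A + B) / Zpart mu v.
  rewrite /prob; congr (_ / _).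
  change (Wsum (fun F => e \in F) mu v = A + B).
  rewrite (@Wsum_four _ e f _ false false true true) //= ?ve ?vf; first by rewrite /C /D /A /B; ring.
  move=> F eF fF; by rewrite !in_setU1 !eqxx ?(negbTE eF) ?(negbTE fF) ?fne ?(negbTE nef) /= ?orbT ?andbF.
have Hf : prob mu v (fun F => f \in F) = (D + B) / Zpart mu v.
  rewrite /prob; congr (_ / _).
  change (Wsum (fun F => f \in F) mu v = D + B).
  rewrite (@Wsum_four _ e f _ false true false true) //= ?ve ?vf; first by rewrite /C /D /A /B; ring.
  move=> F eF fF; by rewrite !in_setU1 !eqxx ?(negbTE eF) ?(negbTE fF) ?fne ?(negbTE nef) /= ?orbT ?andbF.
have Hef : prob mu v (fun F => (e \in F) && (f \in F)) = B / Zpart mu v.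
  rewrite /prob; congr (_ / _).
  change (Wsum (fun F => (e \in F) && (f \in F)) mu v = B).
  rewrite (@Wsum_four _ e f _ false false false true) //= ?ve ?vf; first by rewrite /C /D /A /B; ring.
  move=> F eF fF; by rewrite !in_setU1 !eqxx ?(negbTE eF) ?(negbTE fF) ?fne ?(negbTE nef) /= ?orbT ?andbF.
have H := Hr v vpos e f nef.
rewrite He Hf Hef HZ in H.
have Cpos : 0 < C.
  apply: (Rlt_le_trans _ (mu set0)) => //; apply: Wsum_ge0 => //.
  - by move=> k; apply: Rlt_le.
  - by rewrite /S2 !in_set0.
have Dn : 0 <= D by apply: Wsum_nonneg => // k; apply: Rlt_le.
have An : 0 <= A by apply: Wsum_nonneg => // k; apply: Rlt_le.
have Bn : 0 <= B by apply: Wsum_nonneg => // k; apply: Rlt_le.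
set Z := C + D + (A + B) in H.
have Zpos : 0 < Z by rewrite /Z; lra.
have H2 := Rmult_le_compat_r (Z * Z) _ _ (Rlt_le _ _ (Rmult_lt_0_compat _ _ Zpos Zpos)) H.
have E1 : B / Z * (Z * Z) = B * Z by field; lra.
have E2 : (A + B) / Z * ((D + B) / Z) * (Z * Z) = (A + B) * (D + B) by field; lra.
rewrite E1 E2 /Z in H2; nra.
Qed.

Lemma continuity_pt_ext (f g : R -> R) (x : R) :
  (forall t, f t = g t) -> continuity_pt f x -> continuity_pt g x.
Proof. move=> H; apply: (continuity_pt_locally_ext f g 1 x); [lra | move=> y _; exact: H]. Qed.

Lemma cont_bigRplus (I : Type) (r : seq I) (P : pred I) (h : I -> R -> R) (x : R) :
  (forall i, continuity_pt (h i) x) ->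
  continuity_pt (fun t => \big[Rplus/0]_(i <- r | P i) h i t) x.
Proof.
move=> Hh; elim: r => [|i r IH].
  apply: (continuity_pt_ext (f := fun _ => 0)); first by move=> t; rewrite big_nil.
  exact: continuity_pt_const.
case Pi: (P i).
- apply: (continuity_pt_ext (f := fun t => h i t + \big[Rplus/0]_(j <- r | P j) h j t)).
    by move=> t; rewrite big_cons Pi.
  exact: continuity_pt_plus.
- apply: (continuity_pt_ext (f := fun t => \big[Rplus/0]_(j <- r | P j) h j t)) => //.
  by move=> t; rewrite big_cons Pi.
Qed.

Lemma cont_bigRmult (I : Type) (r : seq I) (P : pred I) (h : I -> R -> R) (x : R) :
  (forall i, continuity_pt (h i) x) ->
  continuity_pt (fun t => \big[Rmult/1]_(i <- r | P i) h i t) x.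
Proof.
move=> Hh; elim: r => [|i r IH].
  apply: (continuity_pt_ext (f := fun _ => 1)); first by move=> t; rewrite big_nil.
  exact: continuity_pt_const.
case Pi: (P i).
- apply: (continuity_pt_ext (f := fun t => h i t * \big[Rmult/1]_(j <- r | P j) h j t)).
    by move=> t; rewrite big_cons Pi.
  exact: continuity_pt_mult.
- apply: (continuity_pt_ext (f := fun t => \big[Rmult/1]_(j <- r | P j) h j t)) => //.
  by move=> t; rewrite big_cons Pi.
Qed.

Lemma cont_Wsum (E : finType) (P : pred {set E}) (g : {set E} -> R) (phi : E -> R -> R) (x : R) :
  (forall k, continuity_pt (phi k) x) ->
  continuity_pt (fun t => Wsum P g (fun k => phi k t)) x.
Proof.
move=> Hphi; rewrite /Wsum; apply: cont_bigRplus => F.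
apply: (continuity_pt_mult (fun _ => g F)); first exact: continuity_pt_const.
rewrite /wpow; exact: cont_bigRmult.
Qed.

Lemma le_at_0 (f g : R -> R) : continuity_pt f 0 -> continuity_pt g 0 ->
  (forall t, 0 < t -> f t <= g t) -> f 0 <= g 0.
Proof.
move=> cf cg H.
have ch : continuity_pt (fun t => g t - f t) 0 by apply: continuity_pt_minus.
apply: Rnot_lt_le => Hlt.
have [d [dpos Hd]] := ch (f 0 - g 0) ltac:(lra).
have Hx : D_x no_cond 0 (d / 2) /\ R_dist (d / 2) 0 < d.
  split; first by split; [exact: I | lra].
  rewrite /R_dist Rminus_0_r Rabs_right; lra.
have := Hd (d / 2) Hx.
have := H (d / 2) ltac:(lra).
rewrite /= /R_dist => H1 H2.
have := Rle_abs (g (d / 2) - f (d / 2) - (g 0 - f 0)); lra.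
Qed.

Lemma cont_id_shift (a b x : R) : continuity_pt (fun t => a + t * b) x.
Proof.
apply: continuity_pt_plus; first exact: continuity_pt_const.
apply: (continuity_pt_mult (fun t => t) (fun _ => b)); first exact: derivable_continuous_pt (derivable_pt_id x).
exact: continuity_pt_const.
Qed.

Lemma ray_nonneg (E : finType) (mu : {set E} -> R) (e f : E) (u : E -> R) :
  0 < mu set0 -> (forall F, 0 <= mu F) -> rayleigh mu -> e != f -> (forall k, 0 <= u k) ->
  Wsum (S2 e f) (fun F => mu (e |: (f |: F))) u * Wsum (S2 e f) mu u <=
  Wsum (S2 e f) (fun F => mu (e |: F)) u * Wsum (S2 e f) (fun F => mu (f |: F)) u.
Proof.
move=> mu0 mupos Hr nef unn.
pose U t := fun k => u k + t * 1.
have U0 : U 0 = u by apply: functional_extensionality => k; rewrite /U; ring.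
rewrite -U0.
have cU : forall k, continuity_pt (fun t => u k + t * 1) 0 by move=> k; exact: cont_id_shift.
apply: (le_at_0 (f := fun t => Wsum (S2 e f) (fun F => mu (e |: (f |: F))) (U t) * Wsum (S2 e f) mu (U t))
                (g := fun t => Wsum (S2 e f) (fun F => mu (e |: F)) (U t) * Wsum (S2 e f) (fun F => mu (f |: F)) (U t))).
- apply: (continuity_pt_mult (fun t => Wsum _ _ (U t)) (fun t => Wsum _ _ (U t))); exact: cont_Wsum.
- apply: (continuity_pt_mult (fun t => Wsum _ _ (U t)) (fun t => Wsum _ _ (U t))); exact: cont_Wsum.
- move=> t tpos; apply: ray_pos => // k; rewrite /U; have := unn k; lra.
Qed.

Definition upd (E : finType) (u : E -> R) (f : E) (x : R) : E -> R :=
  fun k => if k == f then x else u k.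

Lemma Zdel_W (E : finType) (mu : {set E} -> R) e w :
  Zdel mu e w = Wsum (fun F => e \notin F) mu w.
Proof. by []. Qed.

Lemma Zcon_W (E : finType) (mu : {set E} -> R) e w :
  Zcon mu e w = Wsum (fun F => e \notin F) (fun F => mu (e |: F)) w.
Proof. by []. Qed.

Lemma Wsum_notin_ext (E : finType) (e : E) g (w w' : E -> R) :
  (forall k, k != e -> w k = w' k) ->
  Wsum (fun F => e \notin F) g w = Wsum (fun F => e \notin F) g w'.
Proof.
move=> H; rewrite /Wsum; apply: eq_bigr => F eF; congr (_ * _).
apply: wpow_ext => k kF; apply: H; apply/eqP => Hk; subst k; by rewrite kF in eF.
Qed.

Lemma frac_le (a b c d : R) : 0 < b -> 0 < d -> a * d <= c * b -> a / b <= c / d.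
Proof.
move=> bp dp H.
have E1 : a / b = (a * d) * / (b * d) by field; lra.
have E2 : c / d = (c * b) * / (b * d) by field; lra.
rewrite E1 E2; apply: Rmult_le_compat_r => //.
apply: Rlt_le; apply: Rinv_0_lt_compat; exact: Rmult_lt_0_compat.
Qed.

Lemma gamma_mono1 (E : finType) (mu : {set E} -> R) (e f : E) (u : E -> R) (x x' : R) :
  0 < mu set0 -> (forall F, 0 <= mu F) -> rayleigh mu -> (forall k, 0 <= u k) ->
  0 <= x -> x <= x' ->
  cavity_ratio mu e (upd u f x') <= cavity_ratio mu e (upd u f x).
Proof.
move=> mu0 mupos Hr unn x0 xx'.
case: (eqVneq e f) => [<-|nef].
  rewrite /cavity_ratio !Zdel_W !Zcon_W.
  rewrite (@Wsum_notin_ext _ e _ (upd u e x') (upd u e x)); last first.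
    by move=> k ke; rewrite /upd (negbTE ke).
  rewrite (@Wsum_notin_ext _ e _ (upd u e x') (upd u e x)); last first.
    by move=> k ke; rewrite /upd (negbTE ke).
  exact: Rle_refl.
have fne : (f == e) = false by apply/negbTE; rewrite eq_sym.
have Hq : forall F : {set E}, e \notin F -> f \notin F ->
   [/\ (e \notin F) = true, (e \notin f |: F) = true, (e \notin e |: F) = false
     & (e \notin e |: (f |: F)) = false].
  move=> F eF fF; by rewrite !in_setU1 !eqxx ?(negbTE eF) ?(negbTE fF) ?fne ?(negbTE nef).
have Hext : forall g y, Wsum (S2 e f) g (upd u f y) = Wsum (S2 e f) g u.
  move=> g y; apply: Wsum_S2_ext => k ke kf; by rewrite /upd (negbTE kf).
rewrite /cavity_ratio !Zdel_W !Zcon_W.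
rewrite !(@Wsum_four _ e f (fun F => e \notin F) true true false false) //.
rewrite !Hext /upd eqxx.
set C := Wsum (S2 e f) mu u.
set D := Wsum (S2 e f) (fun F => mu (f |: F)) u.
set A := Wsum (S2 e f) (fun F => mu (e |: F)) u.
set B := Wsum (S2 e f) (fun F => mu (e |: (f |: F))) u.
have HR : B * C <= A * D by apply: ray_nonneg.
have Cpos : 0 < C.
  apply: (Rlt_le_trans _ (mu set0)) => //; apply: Wsum_ge0 => //.
  by rewrite /S2 !in_set0.
have Dn : 0 <= D by apply: Wsum_nonneg.
have An : 0 <= A by apply: Wsum_nonneg.
have Bn : 0 <= B by apply: Wsum_nonneg.
apply: frac_le.
- have : 0 <= x' * D by apply: Rmult_le_pos; lra. lra.
- have : 0 <= x * D by apply: Rmult_le_pos; lra. lra.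
- have : 0 <= (x' - x) * (A * D - B * C) by apply: Rmult_le_pos; lra.
  nra.
Qed.

Lemma gamma_anti (E : finType) (mu : {set E} -> R) (e : E) (w w' : E -> R) :
  0 < mu set0 -> (forall F, 0 <= mu F) -> rayleigh mu -> (forall k, 0 <= w k) ->
  (forall k, w k <= w' k) ->
  cavity_ratio mu e w' <= cavity_ratio mu e w.
Proof.
move=> mu0 mupos Hr wnn ww'.
pose mix (r : seq E) := fun k => if k \in r then w' k else w k.
have mixnn : forall r k, 0 <= mix r k.
  move=> r k; rewrite /mix; case: ifP => _ //; apply: (Rle_trans _ (w k)) => //.
suff H : forall r, cavity_ratio mu e (mix r) <= cavity_ratio mu e w.
  have -> : w' = mix (enum E).
    by apply: functional_extensionality => k; rewrite /mix mem_enum.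
  exact: H.
elim=> [|f r IH].
  have -> : mix [::] = w by apply: functional_extensionality => k; rewrite /mix in_nil.
  exact: Rle_refl.
case fr: (f \in r).
  have -> : mix (f :: r) = mix r.
    apply: functional_extensionality => k; rewrite /mix in_cons.
    by case: eqP => // ->; rewrite fr.
  exact: IH.
have E1 : mix (f :: r) = upd (mix r) f (w' f).
  apply: functional_extensionality => k; rewrite /mix /upd in_cons.
  by case: eqP => // ->.
have E2 : mix r = upd (mix r) f (w f).
  apply: functional_extensionality => k; rewrite /mix /upd.
  by case: eqP => // ->; rewrite fr.
rewrite E1; apply: (Rle_trans _ (cavity_ratio mu e (mix r))) => //.
rewrite {2}E2; apply: gamma_mono1 => //.
Qed.

Lemma der_ext (f g : R -> R) (x l : R) :
  (forall t, f t = g t) -> derivable_pt_lim f x l -> derivable_pt_lim g x l.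
Proof. exact: derivable_pt_lim_ext. Qed.

Lemma der_bigRplus (I : Type) (r : seq I) (P : pred I) (h : I -> R -> R) (h' : I -> R) (x : R) :
  (forall i, derivable_pt_lim (h i) x (h' i)) ->
  derivable_pt_lim (fun t => \big[Rplus/0]_(i <- r | P i) h i t) x (\big[Rplus/0]_(i <- r | P i) h' i).
Proof.
move=> Hh; elim: r => [|i r IH].
  rewrite big_nil; apply: (der_ext (f := fct_cte 0)); first by move=> t; rewrite big_nil.
  exact: derivable_pt_lim_const.
case Pi: (P i).
- rewrite big_cons Pi.
  apply: (der_ext (f := (h i + (fun t => \big[Rplus/0]_(j <- r | P j) h j t))%F)).
    by move=> t; rewrite big_cons Pi.
  exact: derivable_pt_lim_plus.
- rewrite big_cons Pi.
  apply: (der_ext (f := fun t => \big[Rplus/0]_(j <- r | P j) h j t)) => //.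
  by move=> t; rewrite big_cons Pi.
Qed.

Lemma der_mon (c d x : R) (n : nat) :
  derivable_pt_lim (fun t => c * (pow t n * d)) x (c * (INR n * pow x (Nat.pred n) * d)).
Proof.
have H := derivable_pt_lim_scal (fun t => pow t n) (c * d) x _ (derivable_pt_lim_pow x n).
apply: (der_ext (f := mult_real_fct (c * d) (fun t => pow t n))).
  by move=> t; rewrite /mult_real_fct; ring.
have -> : c * (INR n * x ^ Init.Nat.pred n * d) = c * d * (INR n * x ^ Init.Nat.pred n) by ring.
exact: H.
Qed.

Lemma iter_mul (l : R) (n : nat) : iter n (Rmult l) 1 = l ^ n.
Proof. by elim: n => //= n ->. Qed.

Lemma wpow_scale (E : finType) (l : R) (v : E -> R) (F : {set E}) :
  wpow (fun k => l * v k) F = l ^ #|F| * wpow v F.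
Proof.
rewrite /wpow big_split /=; congr (_ * _).
by rewrite big_const iter_mul.
Qed.

Lemma scale_pos (E : finType) (mu : {set E} -> R) (e : E) (w : E -> R) (a : R) :
  0 < mu set0 -> (forall F, 0 <= mu F) -> size_increasing mu -> (forall k, 0 < w k) ->
  0 < a -> a <= 1 ->
  a * cavity_ratio mu e (fun k => a * w k) <= cavity_ratio mu e w.
Proof.
move=> mu0 mupos Hsi wpos apos a1.
pose v := upd w e 1.
have vpos : forall k, 0 < v k by move=> k; rewrite /v /upd; case: eqP => _; [lra | exact: wpos].
pose Pol (P : pred {set E}) l := \big[Rplus/0]_(F | P F) (mu F * (pow l #|F| * wpow v F)).
pose dPol (P : pred {set E}) l :=
  \big[Rplus/0]_(F | P F) (mu F * (INR #|F| * pow l (Nat.pred #|F|) * wpow v F)).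
pose KPol (P : pred {set E}) l := \big[Rplus/0]_(F | P F) (INR #|F| * (mu F * (pow l #|F| * wpow v F))).
have PolW : forall P l, Pol P l = Wsum P mu (fun k => l * v k).
  by move=> P l; rewrite /Pol /Wsum; apply: eq_bigr => F _; rewrite wpow_scale.
have dP : forall P l, derivable_pt_lim (Pol P) l (dPol P l).
  move=> P l; rewrite /Pol /dPol; apply: der_bigRplus => F; exact: der_mon.
have KdP : forall P l, l * dPol P l = KPol P l.
  move=> P l; rewrite /dPol /KPol big_distrr /=; apply: eq_bigr => F _.
  case: #|F| => [|n] /=; ring.
pose N := Pol (fun F => e \in F).
pose Z := Pol (fun _ => true).
pose M := Pol (fun F => e \notin F).
have ZNM : forall l, Z l = N l + M l.
  by move=> l; rewrite /Z /N /M /Pol (bigID (fun F : {set E} => e \in F)).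
have lvnn : forall l, 0 < l -> forall k, 0 <= l * v k.
  by move=> l lp k; apply: Rlt_le; apply: Rmult_lt_0_compat.
have Mpos : forall l, 0 < l -> 0 < M l.
  move=> l lp; rewrite /M PolW; apply: (Rlt_le_trans _ (mu set0)) => //.
  by apply: Wsum_ge0 => //; [exact: lvnn | rewrite in_set0].
have Npos : forall l, 0 < l -> 0 <= N l.
  by move=> l lp; rewrite /N PolW; apply: Wsum_nonneg => //; exact: lvnn.
have SI : forall l, 0 < l -> KPol (fun F => e \in F) l * Z l > KPol (fun _ => true) l * N l.
  move=> l lp.
  have lvp : positive_weights (fun k => l * v k) by move=> k; apply: Rmult_lt_0_compat.
  have H := Hsi _ lvp e.
  have HZ : Zpart mu (fun k => l * v k) = Z l.
    by rewrite /Zpart /Z /Pol; apply: eq_bigr => F _; rewrite wpow_scale.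
  have HK : expect mu (fun k => l * v k) (fun F => INR #|F|) = KPol (fun _ => true) l / Z l.
    rewrite /expect HZ; congr (_ / _); rewrite /KPol; apply: eq_bigr => F _; by rewrite wpow_scale.
  have HKe : expect mu (fun k => l * v k) (fun F => INR #|F| * (if e \in F then 1 else 0))
      = KPol (fun F => e \in F) l / Z l.
    rewrite /expect HZ; congr (_ / _); rewrite /KPol [in RHS]big_mkcond /=; apply: eq_bigr => F _.
    rewrite wpow_scale; case: (e \in F); ring.
  have HN : prob mu (fun k => l * v k) (fun F => e \in F) = N l / Z l.
    rewrite /prob HZ; congr (_ / _); rewrite /N /Pol; apply: eq_bigr => F _; by rewrite wpow_scale.
  rewrite HK HKe HN in H.
  have Zp : 0 < Z l by rewrite ZNM; have := Mpos l lp; have := Npos l lp; lra.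
  have H2 := Rmult_lt_compat_r (Z l * Z l) _ _ (Rmult_lt_0_compat _ _ Zp Zp) H.
  have E1 : KPol (fun F => e \in F) l / Z l * (Z l * Z l) = KPol (fun F => e \in F) l * Z l.
    by field; lra.
  have E2 : KPol (fun _ => true) l / Z l * (N l / Z l) * (Z l * Z l) = KPol (fun _ => true) l * N l.
    by field; lra.
  rewrite E1 E2 in H2; exact: H2.
pose h := fun l => N l / M l.
pose h' := fun l => (dPol (fun F => e \in F) l * M l - (dPol (fun _ => true) l - dPol (fun F => e \in F) l) * N l) / (M l)².
have Hder : forall c, 0 < c -> derivable_pt_lim h c (h' c).
  move=> c cp.
  have HM : forall l, M l = (Z - N)%F l by move=> l; rewrite /minus_fct ZNM; ring.
  have dM : derivable_pt_lim (Z - N)%F c (dPol (fun _ => true) c - dPol (fun F => e \in F) c).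
    by apply: derivable_pt_lim_minus; apply: dP.
  have := derivable_pt_lim_div N (Z - N)%F c _ _ (dP _ c) dM.
  rewrite -HM => /(_ ltac:(have := Mpos c cp; lra)).
  apply: derivable_pt_lim_ext => l; rewrite /div_fct /h HM //.
have h'pos : forall c, 0 < c -> 0 < h' c.
  move=> c cp.
  set numer := dPol (fun F => e \in F) c * M c - (dPol (fun _ => true) c - dPol (fun F => e \in F) c) * N c.
  have En : c * numer = KPol (fun F => e \in F) c * Z c - KPol (fun _ => true) c * N c.
    rewrite /numer -!KdP ZNM; ring.
  have Hcn : 0 < c * numer by rewrite En; have := SI c cp; rewrite /Rgt; lra.
  have np : 0 < numer.
    apply: Rnot_le_lt => Hle.
    have : c * numer <= c * 0 by apply: Rmult_le_compat_l; lra.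
    lra.
  rewrite /h' -/numer; apply: Rmult_lt_0_compat => //.
  apply: Rinv_0_lt_compat; have := Mpos c cp; rewrite /Rsqr; nra.
have hmono : h a <= h 1.
  case: (Req_dec a 1) => [->|a1']; first lra.
  have alt : a < 1 by lra.
  have [c [Hc Hci]] := MVT_cor2 h h' a 1 alt (fun c Hc => Hder c ltac:(lra)).
  have := h'pos c ltac:(lra).
  move=> hp.
  have : 0 <= h' c * (1 - a) by apply: Rmult_le_pos; lra.
  lra.
have hrel : forall l, 0 < l -> h l = l * cavity_ratio mu e (fun k => l * w k).
  move=> l lp; rewrite /h /cavity_ratio Zdel_W Zcon_W.
  have Hx : forall k, k != e -> l * w k = l * v k by move=> k ke; rewrite /v /upd (negbTE ke).
  rewrite (Wsum_notin_ext _ Hx) (Wsum_notin_ext _ Hx).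
  have HM : M l = Wsum (fun F => e \notin F) mu (fun k => l * v k) by rewrite /M PolW.
  have HN : N l = l * Wsum (fun F => e \notin F) (fun F => mu (e |: F)) (fun k => l * v k).
    rewrite /N PolW (Wsum_split e).
    rewrite (@Wsum_sel _ _ (fun _ => true) false); last by move=> F; rewrite andbF andbN.
    have -> : v e = 1 by rewrite /v /upd eqxx.
    rewrite Rmult_1_r Rplus_0_l; congr (_ * _); rewrite /Wsum; apply: eq_bigl => F.
    by rewrite setU11.
  by rewrite HN -HM /Rdiv Rmult_assoc.
rewrite -hrel //.
have -> : cavity_ratio mu e w = h 1.
  rewrite hrel; last lra.
  rewrite Rmult_1_l; congr (cavity_ratio mu e _).
  by apply: functional_extensionality => k; ring.
exact: hmono.
Qed.

Lemma cont_gamma (E : finType) (mu : {set E} -> R) (e : E) (phi : E -> R -> R) :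
  0 < mu set0 -> (forall F, 0 <= mu F) -> (forall k, continuity_pt (phi k) 0) ->
  (forall k, 0 <= phi k 0) ->
  continuity_pt (fun t => cavity_ratio mu e (fun k => phi k t)) 0.
Proof.
move=> mu0 mupos cphi pnn.
apply: (continuity_pt_ext (f := ((fun t => Wsum (fun F => e \notin F) (fun F => mu (e |: F)) (fun k => phi k t)) /
                                 (fun t => Wsum (fun F => e \notin F) mu (fun k => phi k t)))%F)).
  by move=> t; rewrite /div_fct.
apply: continuity_pt_div; try exact: cont_Wsum.
apply: Rgt_not_eq; apply: (Rlt_le_trans _ (mu set0)) => //.
by apply: Wsum_ge0 => //; rewrite in_set0.
Qed.

Lemma scale_nonneg (E : finType) (mu : {set E} -> R) (e : E) (w : E -> R) (a : R) :
  0 < mu set0 -> (forall F, 0 <= mu F) -> size_increasing mu -> (forall k, 0 <= w k) ->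
  0 < a -> a <= 1 ->
  a * cavity_ratio mu e (fun k => a * w k) <= cavity_ratio mu e w.
Proof.
move=> mu0 mupos Hsi wnn apos a1.
have W0 : (fun k => w k + 0 * 1) = w by apply: functional_extensionality => k; ring.
have W0a : (fun k => a * (w k + 0 * 1)) = (fun k => a * w k)
  by apply: functional_extensionality => k; ring.
rewrite -W0a -{2}W0.
apply: (le_at_0 (f := fun t => a * cavity_ratio mu e (fun k => a * (w k + t * 1)))
                (g := fun t => cavity_ratio mu e (fun k => w k + t * 1))).
- apply: (continuity_pt_mult (fun _ => a)); first exact: continuity_pt_const.
  apply: (@cont_gamma _ mu e (fun k t => a * (w k + t * 1))) => //.
  + move=> k; apply: (continuity_pt_mult (fun _ => a)); first exact: continuity_pt_const.
    exact: cont_id_shift.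
  + move=> k; apply: Rmult_le_pos; [lra | have := wnn k; lra].
- apply: (@cont_gamma _ mu e (fun k t => w k + t * 1)) => //.
  + move=> k; exact: cont_id_shift.
  + move=> k; have := wnn k; lra.
- move=> t tp; apply: scale_pos => // k; have := wnn k; lra.
Qed.

Lemma cv_le (u : nat -> R) (l c : R) : Un_cv u l -> (forall n, u n <= c) -> l <= c.
Proof.
move=> Hu Hc; apply: Rnot_lt_le => Hlt.
have [N HN] := Hu (l - c) ltac:(lra).
have := HN N (Nat.le_refl N); rewrite /R_dist => H.
have := Hc N; have := Rle_abs (l - u N); rewrite Rabs_minus_sym; lra.
Qed.

Lemma cv_ge (u : nat -> R) (l c : R) : Un_cv u l -> (forall n, c <= u n) -> c <= l.
Proof.
move=> Hu Hc; apply: Rnot_lt_le => Hlt.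
have [N HN] := Hu (c - l) ltac:(lra).
have := HN N (Nat.le_refl N); rewrite /R_dist => H.
have := Hc N; have := Rle_abs (u N - l); lra.
Qed.

Lemma cav_op_eq (V : countType) (G : network V) (x : config V) (i j : V) (Hj : j \in nb G i) :
  cavity_op G x i j = cavity_ratio (@lmu V G i) (SeqSub Hj) (fun k => x (ssval k) i).
Proof.
rewrite /cavity_op.
have -> : (insub j : option (seq_sub (nb G i))) = Some (SeqSub Hj).
  by rewrite (insubT (fun x => x \in nb G i) Hj).
by [].
Qed.

Theorem mainTheorem10 (V : countType) (G : network V) (xs : R -> config V) :
  cavity_monotone_network G ->
  (forall t, 0 < t ->
     is_cavity_solution G t (xs t) /\ globally_attractive G t (xs t) /\
     (forall y, is_cavity_solution G t y ->
        forall i j, j \in nb G i -> y i j = xs t i j)) ->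
  (forall s t, 0 < s -> s <= t -> forall i j, j \in nb G i ->
     s / t * xs t i j <= xs s i j /\ xs s i j <= xs t i j) /\
  (forall i j, j \in nb G i -> forall t0, 0 < t0 ->
     continuity_pt (fun t => xs t i j) t0).
Proof.
move=> Hcm Hsol.
have bounds : forall s t, 0 < s -> s <= t -> forall i j, j \in nb G i ->
     s / t * xs t i j <= xs s i j /\ xs s i j <= xs t i j.
  move=> s t sp st.
  have tp : 0 < t by lra.
  have [[XC XE] [_ _]] := Hsol t tp.
  have [_ [XA _]] := Hsol s sp.
  set X := xs t in XC XE *.
  set a := s / t.
  have ap : 0 < a by apply: Rdiv_lt_0_compat.
  have a1 : a <= 1 by rewrite /a; apply: (Rmult_le_reg_r t) => //; field_simplify; lra.
  have sa : s = a * t by rewrite /a; field; lra.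
  clearbody a.
  have inv : forall n i j, j \in nb G i ->
      a * X i j <= cavity_iter G s n X i j <= X i j.
    elim=> [|n IH] i j Hj.
      rewrite /cavity_iter /=; have := XC i j Hj; split; nra.
    rewrite /cavity_iter iterS -/(cavity_iter G s n X).
    rewrite (cav_op_eq _ Hj) (XE i j Hj) (cav_op_eq _ Hj).
    set Y := cavity_iter G s n X.
    have [mu0 [Hr Hsi]] := Hcm i.
    have mupos := @lmu_nonneg V G i.
    have Hk : forall k : seq_sub (nb G i), a * X (ssval k) i <= Y (ssval k) i <= X (ssval k) i.
      move=> k; apply: IH; rewrite nb_sym; exact: ssvalP.
    have Xk : forall k : seq_sub (nb G i), 0 <= X (ssval k) i.
      move=> k; apply: XC; rewrite nb_sym; exact: ssvalP.
    set mu := @lmu V G i.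
    set e := SeqSub Hj.
    clearbody Y.
    have G1 : cavity_ratio mu e (fun k => X (ssval k) i) <= cavity_ratio mu e (fun k => Y (ssval k) i).
      apply: gamma_anti => // k; [exact: Rle_trans (Rmult_le_pos _ _ (Rlt_le _ _ ap) (Xk k)) (proj1 (Hk k)) | exact: (proj2 (Hk k))].
    have G2 : cavity_ratio mu e (fun k => Y (ssval k) i) <= cavity_ratio mu e (fun k => a * X (ssval k) i).
      apply: gamma_anti => // k; [exact: Rmult_le_pos _ _ (Rlt_le _ _ ap) (Xk k) | exact: (proj1 (Hk k))].
    have G3 : a * cavity_ratio mu e (fun k => a * X (ssval k) i) <= cavity_ratio mu e (fun k => X (ssval k) i).
      apply: scale_nonneg => //.
    rewrite sa; split.
    + have : a * t * cavity_ratio mu e (fun k => X (ssval k) i) <= a * t * cavity_ratio mu e (fun k => Y (ssval k) i).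
        apply: Rmult_le_compat_l => //; nra.
      lra.
    + have H1 : a * t * cavity_ratio mu e (fun k => Y (ssval k) i) <= t * (a * cavity_ratio mu e (fun k => a * X (ssval k) i)).
        have -> : t * (a * cavity_ratio mu e (fun k => a * X (ssval k) i)) = a * t * cavity_ratio mu e (fun k => a * X (ssval k) i) by ring.
        apply: Rmult_le_compat_l => //; nra.
      have : t * (a * cavity_ratio mu e (fun k => a * X (ssval k) i)) <= t * cavity_ratio mu e (fun k => X (ssval k) i).
        apply: Rmult_le_compat_l => //; lra.
      lra.
  move=> i j Hj.
  have Hcv := XA X XC i j Hj.
  split.
  - apply: (cv_ge Hcv) => n; exact: (proj1 (inv n i j Hj)).
  - apply: (cv_le Hcv) => n; exact: (proj2 (inv n i j Hj)).
split => // i j Hj t0 t0p.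
have [[XC _] _] := Hsol t0 t0p.
set X0 := xs t0 i j.
have X0n : 0 <= X0 by apply: XC.
have Hlip : forall t, 0 < t -> Rabs (xs t i j - X0) <= Rabs (t - t0) * (X0 / t0).
  move=> t tp; case: (Rle_lt_dec t t0) => Ht.
  - have [B1 B2] := bounds t t0 tp Ht i j Hj.
    rewrite -/X0 in B1 B2.
    rewrite Rabs_left1; last lra.
    rewrite Rabs_left1; last lra.
    have E : - (t - t0) * (X0 / t0) = X0 - t / t0 * X0 by field; lra.
    rewrite E; lra.
  - have [B1 B2] := bounds t0 t t0p (Rlt_le _ _ Ht) i j Hj.
    rewrite -/X0 in B1 B2.
    have tpos : 0 < t by lra.
    have B3 : xs t i j <= t / t0 * X0.
      have E : xs t i j = t / t0 * (t0 / t * xs t i j) by field; lra.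
      rewrite E; apply: Rmult_le_compat_l => //.
      apply: Rlt_le; apply: Rdiv_lt_0_compat; lra.
    rewrite Rabs_right; last lra.
    rewrite Rabs_right; last lra.
    have E : (t - t0) * (X0 / t0) = t / t0 * X0 - X0 by field; lra.
    rewrite E; lra.
move=> eps epsp.
pose K := X0 / t0 + 1.
have Q0 : 0 <= X0 / t0 by apply: Rmult_le_pos => //; apply: Rlt_le; apply: Rinv_0_lt_compat.
have Kp : 0 < K by rewrite /K; lra.
have HK : X0 / t0 <= K by rewrite /K; lra.
clearbody K.
exists (Rmin (t0 / 2) (eps / K)); split.
  apply: Rmin_pos; [lra | exact: Rdiv_lt_0_compat].
move=> t [_ Hd]; rewrite /= /R_dist in Hd *.
have Hd1 := Rlt_le_trans _ _ _ Hd (Rmin_l _ _).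
have Hd2 := Rlt_le_trans _ _ _ Hd (Rmin_r _ _).
have tp : 0 < t by have := Rle_abs (t0 - t); rewrite Rabs_minus_sym; lra.
apply: (Rle_lt_trans _ _ _ (Hlip t tp)).
apply: (Rle_lt_trans _ (Rabs (t - t0) * K)).
  apply: Rmult_le_compat_l => //; exact: Rabs_pos.
have : Rabs (t - t0) * K < eps / K * K by apply: Rmult_lt_compat_r.
have -> : eps / K * K = eps by field; lra.
done.
Qed.
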